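(* Suppose the e-values are valid, i.e. $\mathbb{E}[e_t\mid\mathcal{F}_{t-1}]\le1$ a.s. whenever $\theta_t=0$, and let $(\lambda_t)_{t\ge1}$ be a sequence of random variables with values in $(0,1)$ such that each $\lambda_t$ is $\mathcal{F}_{t-1}$-measurable. Define $$\widehat{\mathrm{FDP}}^{\mathrm{SAFFRON}}_{\mathrm{e}}(t)=\sum_{j=1}^t\frac{\alpha_j}{R_{j-1}+1}\cdot\frac{\mathbb{1}\{e_j<1/\lambda_j\}}{1-\lambda_j},\qquad \mathrm{FDP}^*_{\mathrm{e}}(t)=\sum_{j\in\mathcal{H}_0(t)}\frac{\alpha_j}{R_{j-1}+1}.$$ Then (a) $\mathbb{E}[\widehat{\mathrm{FDP}}^{\mathrm{SAFFRON}}_{\mathrm{e}}(t)]\ge\mathbb{E}[\mathrm{FDP}^*_{\mathrm{e}}(t)]$ for all $t\ge1$; and (b) if the $\mathcal{F}_{t-1}$-measurable testing levels satisfy $\widehat{\mathrm{FDP}}^{\mathrm{SAFFRON}}_{\mathrm{e}}(t)\le\alpha$ almost surely for every $t\ge1$, then $\mathrm{FDR}(t)\le\alpha$ for all $t\ge1$.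
   Context: Let $\alpha\in(0,1)$ be a target level. Hypotheses are indexed by $t=1,2,\dots$; $\theta_t\in\{0,1\}$ is a fixed (non-random) indicator with $\theta_t=0$ iff the $t$-th null hypothesis is true. $e_1,e_2,\dots$ are nonnegative random variables (e-values). Testing levels $\alpha_1,\alpha_2,\dots$ are nonnegative random variables and the decisions are $\delta_t=\mathbb{1}\{e_t\ge 1/\alpha_t\}$ (with $\delta_t=0$ when $\alpha_t=0$). Let $\mathcal{F}_t=\sigma(\delta_1,\dots,\delta_t)$, $\mathcal{F}_0$ trivial; each $\alpha_t$ is required to be $\mathcal{F}_{t-1}$-measurable. $R_t=\sum_{j=1}^t\delta_j$, $R_0=0$. $\mathcal{H}_0(t)=\{j\le t:\theta_j=0\}$. $\mathrm{FDR}(t)=\mathbb{E}\big[\sum_{j\in\mathcal{H}_0(t)}\delta_j/(R_t\vee 1)\big]$. *)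

(* Defs.v *)
From HB Require Import structures.
From mathcomp Require Import all_boot all_order all_algebra.
From mathcomp Require Import all_classical all_reals all_analysis.
Set Implicit Arguments. Unset Strict Implicit. Unset Printing Implicit Defensive.
Import Order.TTheory GRing.Theory Num.Theory.
Local Open Scope classical_set_scope.
Local Open Scope ring_scope.

Section OnlineEFDR.
Variables (d : measure_display) (T : measurableType d) (R : realType).

(* decision delta_t = 1{ e_t >= 1/alpha_t }, with delta_t = 0 when alpha_t = 0;
   hypotheses are indexed t = 1,2,...; index 0 is unused. *)
Definition delta (alpha e : nat -> T -> R) (t : nat) (w : T) : R :=
  if (0 < alpha t w) && (1 / alpha t w <= e t w) then 1 else 0.

Definition Rej (alpha e : nat -> T -> R) (t : nat) (w : T) : R :=
  \sum_(1 <= j < t.+1) delta alpha e j w.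

Definition filt (alpha e : nat -> T -> R) (t : nat) : set (set T) :=
  <<s [set A | exists j (B : set R),
        [/\ (1 <= j <= t)%N, measurable B & A = delta alpha e j @^-1` B] ] >>.

Definition meas_wrt (G : set (set T)) (f : T -> R) : Prop :=
  forall B : set R, measurable B -> G (f @^-1` B).

(* theta j = false  iff  the j-th null hypothesis is true *)
Definition FDPhat_saffron (alpha e lambda : nat -> T -> R) (t : nat) (w : T) : R :=
  \sum_(1 <= j < t.+1)
     (alpha j w / (Rej alpha e j.-1 w + 1)) *
     ((if e j w < 1 / lambda j w then 1 else 0) / (1 - lambda j w)).

Definition FDPstar (theta : nat -> bool) (alpha e : nat -> T -> R) (t : nat) (w : T) : R :=
  \sum_(1 <= j < t.+1 | ~~ theta j) alpha j w / (Rej alpha e j.-1 w + 1).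

Definition FDP (theta : nat -> bool) (alpha e : nat -> T -> R) (t : nat) (w : T) : R :=
  (\sum_(1 <= j < t.+1 | ~~ theta j) delta alpha e j w) / Num.max (Rej alpha e t w) 1.

End OnlineEFDR.

(* Main.v *)
Require Import Defs.
From HB Require Import structures.
From mathcomp Require Import all_boot all_order all_algebra.
From mathcomp Require Import all_classical all_reals all_analysis.
From mathcomp Require Import measurable_realfun finmap.
From mathcomp Require Import ring lra.
Import Order.TTheory GRing.Theory Num.Theory.
Local Open Scope classical_set_scope.
Local Open Scope ring_scope.

Lemma measurable_inv (R : realType) : measurable_fun setT (@GRing.inv R).
Proof.
rewrite -(setUv [set (0:R)]) setUC.
apply/measurable_funU => //; first exact: measurableC.
split; last exact: measurable_fun_set1.
apply: open_continuous_measurable_fun.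
  by apply: closed_openC; exact: (accessible_closed_set1 (hausdorff_accessible (@Rhausdorff R))).
move=> x /set_mem /= x0; apply: inv_continuous; exact/eqP.
Qed.

Import HBNNSimple.
Section Key.
Context d (T : measurableType d) (R : realType).
Variables (P : probability T R) (G : set (set T)).
Hypothesis Gm : forall A, <<s G>> A -> measurable A.
Variable (e : T -> R).
Hypothesis me : measurable_fun setT e.
Hypothesis e0 : forall w, 0 <= e w.
Hypothesis Ge : forall A, <<s G>> A -> (\int[P]_(w in A) (e w)%:E <= P A)%E.

Local Notation ST := (g_sigma_algebraType G).

Lemma sub_meas (f : T -> R) : measurable_fun [set: ST] f -> measurable_fun [set: T] f.
Proof.
move=> mf _ B mB; apply: Gm; exact: (mf measurableT B mB).
Qed.

Lemma key_indic (A : set T) (c : R) : 0 <= c -> <<s G>> A ->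
  (\int[P]_w ((c * \1_A w) * e w)%:E <= \int[P]_w (c * \1_A w)%:E)%E.
Proof.
move=> c0 GA; have mA := Gm _ GA.
have mi : measurable_fun setT (\1_A : T -> R) by exact: measurable_indic.
have mie : measurable_fun setT (fun w => (\1_A w * e w)%:E).
  by apply/measurable_EFinP; exact: measurable_funM.
under eq_integral do rewrite -mulrA EFinM.
rewrite ge0_integralZl_EFin //; try (by move=> w _; rewrite lee_fin mulr_ge0); try exact: mie.
under [X in (_ <= X)%E]eq_integral do rewrite EFinM.
rewrite ge0_integralZl_EFin //; try (by move=> w _; rewrite lee_fin); try (by apply/measurable_EFinP).
rewrite integral_indic // setIT; apply: lee_wpmul2l; first by rewrite lee_fin.
apply: le_trans (Ge _ GA); rewrite [leRHS]integral_mkcond le_eqVlt; apply/orP; left.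
by apply/eqP; apply: eq_integral => w _; rewrite /patch indicE; case: ifP => _; rewrite ?mul1r ?mul0r.
Qed.

Lemma key_sum (I : Type) (s : seq I) (c : I -> R) (A : I -> set T) :
  (forall i, 0 <= c i) -> (forall i, <<s G>> (A i)) ->
  (\int[P]_w ((\sum_(i <- s) c i * \1_(A i) w) * e w)%:E
     <= \int[P]_w (\sum_(i <- s) c i * \1_(A i) w)%:E)%E.
Proof.
move=> c0 GA.
have mi i : measurable_fun setT (\1_(A i) : T -> R).
  by apply: measurable_indic; exact: Gm.
under eq_integral do rewrite mulr_suml -sumEFin.
under [X in (_ <= X)%E]eq_integral do rewrite -sumEFin.
rewrite ge0_integral_sum //; last 2 first.
- move=> i; apply/measurable_EFinP; apply: measurable_funM => //.
  exact: measurable_funM.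
- by move=> i w _; rewrite lee_fin !mulr_ge0.
rewrite ge0_integral_sum //; last 2 first.
- by move=> i; apply/measurable_EFinP; apply: measurable_funM.
- by move=> i w _; rewrite lee_fin !mulr_ge0.
by apply: lee_sum => i _; exact: key_indic.
Qed.

Lemma key_nnsfun (h : {nnsfun ST >-> R}) (f : T -> R) : f = (fun x : ST => h x) ->
  (\int[P]_w (f w * e w)%:E <= \int[P]_w (f w)%:E)%E.
Proof.
move=> ->.
pose s := fset_set (h @` setT).
have hE (w : ST) : h w = \sum_(i < #|`s|%fset) (Num.max (s`_i) 0) * \1_(h @^-1` [set s`_i]) w.
  rewrite (fimfunEord h w); apply: eq_bigr => i _.
  rewrite indicE; case: (boolP (w \in _)); rewrite ?mulr0 ?mulr1 // => /set_mem /= <-.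
  by rewrite max_l.
under eq_integral do rewrite hE.
under [X in (_ <= X)%E]eq_integral do rewrite hE.
apply: key_sum => i; first by rewrite le_max lexx orbT.
by apply: (measurable_funPTI h).
Qed.

Lemma key (g : T -> R) : measurable_fun [set: ST] g -> (forall w, 0 <= g w) ->
  (\int[P]_w (g w * e w)%:E <= \int[P]_w (g w)%:E)%E.
Proof.
move=> mg g0.
have mgE : measurable_fun [set: ST] (EFin \o g) by apply/measurable_EFinP.
pose h := nnsfun_approx measurableT mgE.
pose hf n : T -> R := fun x : ST => h n x.
have mh n : measurable_fun [set: T] (hf n).
  by apply: sub_meas; exact: (measurable_funPT (h n)).
have hf0 n x : 0 <= hf n x by rewrite /hf.
have hcvg x : EFin \o (hf ^~ x) @ \oo --> (g x)%:E.
  by apply: (@cvg_nnsfun_approx _ ST R setT measurableT (EFin \o g) mgE) => // y _; rewrite lee_fin.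
have hnd x : nondecreasing_seq (hf ^~ x).
  by move=> m n mn; exact/lefP/(nd_nnsfun_approx measurableT mgE mn).
have L1 : (\int[P]_w (hf n w * e w)%:E)%E @[n --> \oo] --> (\int[P]_w (g w * e w)%:E)%E.
  have -> : (\int[P]_w (g w * e w)%:E =
      \int[P]_w (limn (fun n => (hf n w * e w)%:E) : \bar R))%E.
    apply: eq_integral => w _; apply/esym/cvg_lim => //.
    under eq_fun do rewrite EFinM.
    rewrite EFinM; apply: cvgeM; first exact: mule_def_fin.
      exact: hcvg.
    exact: cvg_cst.
  apply: cvg_monotone_convergence => //.
  - by move=> n; apply/measurable_EFinP; apply: measurable_funM.
  - by move=> n w _; rewrite lee_fin mulr_ge0.
  - by move=> w _ m n mn; rewrite lee_fin ler_wpM2r// hnd.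
have L2 : (\int[P]_w (hf n w)%:E)%E @[n --> \oo] --> (\int[P]_w (g w)%:E)%E.
  have -> : (\int[P]_w (g w)%:E = \int[P]_w (limn (fun n => (hf n w)%:E) : \bar R))%E.
    by apply: eq_integral => w _; apply/esym/cvg_lim => //; exact: hcvg.
  apply: cvg_monotone_convergence => //.
  - by move=> n; apply/measurable_EFinP.
  - by move=> n w _; rewrite lee_fin.
  - by move=> w _ m n mn; rewrite lee_fin hnd.
apply: (lee_cvg_to L1 L2); near=> n; exact: key_nnsfun.
Unshelve. all: by end_near.
Qed.

Lemma partA (c l : T -> R) : measurable_fun [set: ST] c -> (forall w, 0 <= c w) ->
  measurable_fun [set: ST] l -> (forall w, 0 < l w < 1) ->
  (\int[P]_w (c w)%:E <=
   \int[P]_w (c w * ((if e w < 1 / l w then 1 else 0) / (1 - l w)))%:E)%E.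
Proof.
move=> mc c0 ml l01.
have l0 w : 0 < l w by case/andP: (l01 w).
have l1 w : 0 < 1 - l w by case/andP: (l01 w) => _; rewrite subr_gt0.
pose ind w : R := if e w < 1 / l w then 1 else 0.
have ind0 w : 0 <= ind w by rewrite /ind; case: ifP.
have mlT : measurable_fun [set: T] l by exact: sub_meas.
have mind : measurable_fun [set: T] ind.
  apply: measurable_fun_ifT => //; apply: measurable_fun_ltr => //.
  apply: measurable_funM => //; exact: measurableT_comp (measurable_inv R) mlT.
pose q w := c w / (1 - l w).
have q0 w : 0 <= q w by rewrite /q divr_ge0 // ltW.
have mq : measurable_fun [set: ST] q.
  apply: measurable_funM => //; apply: measurableT_comp (measurable_inv R) _.
  exact: measurable_funB.
pose hn (n : nat) w := Num.min (q w) n%:R.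
have hn0 n w : 0 <= hn n w by rewrite /hn le_min q0 ler0n.
have mhn n : measurable_fun [set: ST] (hn n) by apply: measurable_minr.
have mhnT n : measurable_fun [set: T] (hn n) by exact: sub_meas.
have step n : (\int[P]_w (hn n w * (1 - l w))%:E <=
    \int[P]_w (c w * (ind w / (1 - l w)))%:E)%E.
  have hnl0 w : 0 <= hn n w * l w by rewrite mulr_ge0 // ltW.
  have mhnl : measurable_fun [set: ST] (fun w => hn n w * l w) by exact: measurable_funM.
  have fin : (\int[P]_w (hn n w * l w)%:E)%E \is a fin_num.
    rewrite ge0_fin_numE; last by apply: integral_ge0 => w _; rewrite lee_fin.
    apply: (@le_lt_trans _ _ (\int[P]_w (n%:R)%:E)%E).
      apply: ge0_le_integral => //.
      - by move=> w _; rewrite lee_fin.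
      - by apply/measurable_EFinP; exact: sub_meas.
      - move=> w _; rewrite lee_fin; apply: (@le_trans _ _ (hn n w * 1)).
          by rewrite ler_wpM2l // ltW //; case/andP: (l01 w).
        by rewrite mulr1 /hn ge_min lexx orbT.
    rewrite integral_cst //; set X := (X in (_ * X)%E); have -> : X = 1%E by exact: probability_setT.
    by rewrite mule1 ltry.
  rewrite -(leeD2rE _ _ fin).
  have E1 : (\int[P]_w (hn n w * (1 - l w))%:E + \int[P]_w (hn n w * l w)%:E =
             \int[P]_w (hn n w)%:E)%E.
    rewrite -ge0_integralD //.
    - by apply: eq_integral => w _; rewrite -EFinD; congr (_%:E); ring.
    - by move=> w _; rewrite lee_fin mulr_ge0 // ltW.
    - apply/measurable_EFinP; apply: measurable_funM => //; exact: measurable_funB.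
    - by move=> w _; rewrite lee_fin.
    - by apply/measurable_EFinP; exact: sub_meas.
  rewrite E1.
  apply: (@le_trans _ _ (\int[P]_w (hn n w * ind w + hn n w * l w * e w)%:E)%E).
    apply: ge0_le_integral => //.
    - by move=> w _; rewrite lee_fin.
    - by apply/measurable_EFinP.
    - apply/measurable_EFinP; apply: measurable_funD; first exact: measurable_funM.
      apply: measurable_funM => //; exact: sub_meas.
    - move=> w _; rewrite lee_fin /ind; case: ifP => H.
        by rewrite mulr1 lerDl mulr_ge0.
      rewrite mulr0 add0r -mulrA ler_peMr //.
      have : 1 / l w <= e w by rewrite leNgt H.
      by rewrite ler_pdivrMr // mulrC.
  under eq_integral do rewrite EFinD.
  rewrite ge0_integralD //; last 4 first.
  - by move=> w _; rewrite lee_fin mulr_ge0.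
  - by apply/measurable_EFinP; apply: measurable_funM.
  - by move=> w _; rewrite lee_fin !mulr_ge0 // ltW.
  - apply/measurable_EFinP; apply: measurable_funM => //; exact: sub_meas.
  apply: leeD; last exact: key.
  apply: ge0_le_integral => //.
  - by move=> w _; rewrite lee_fin mulr_ge0.
  - by apply/measurable_EFinP; apply: measurable_funM.
  - apply/measurable_EFinP; apply: measurable_funM; first exact: sub_meas.
    apply: measurable_funM => //; apply: measurableT_comp (measurable_inv R) _.
    exact: measurable_funB.
  - move=> w _; rewrite lee_fin.
    have -> : c w * (ind w / (1 - l w)) = q w * ind w by rewrite /q; ring.
    by rewrite ler_wpM2r // /hn ge_min lexx.
have L : (\int[P]_w (hn n w * (1 - l w))%:E)%E @[n --> \oo] --> (\int[P]_w (c w)%:E)%E.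
  have -> : (\int[P]_w (c w)%:E = \int[P]_w (limn (fun n => (hn n w * (1 - l w))%:E) : \bar R))%E.
    apply: eq_integral => w _; apply/esym/cvg_lim => //; apply: cvg_near_cst.
    near=> n; rewrite /hn min_l ?/q ?divfK //; first by rewrite gt_eqF.
    near: n; exists (Num.truncn (q w)).+1 => // m /= qm.
    by rewrite ltW // (lt_le_trans (Num.Theory.truncnS_gt _)) // ler_nat.
  apply: cvg_monotone_convergence => //.
  - move=> n; apply/measurable_EFinP; apply: measurable_funM => //; exact: measurable_funB.
  - by move=> n w _; rewrite lee_fin mulr_ge0 // ltW.
  - move=> w _ m n mn; rewrite lee_fin; apply: ler_wpM2r; first exact: ltW.
    by rewrite /hn le_min !ge_min lexx ler_nat mn !orbT.
apply: (lee_cvg_to L (cvg_cst _)); near=> n; exact: step.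
Unshelve. all: by end_near.
Qed.
End Key.

Set Implicit Arguments.
Section Main.
Context d (T : measurableType d) (R : realType).
Variables (alpha e : nat -> T -> R).
Hypothesis malpha : forall t, measurable_fun setT (alpha t).
Hypothesis me : forall t, measurable_fun setT (e t).

Definition G0 t : set (set T) := [set A | exists j (B : set R),
        [/\ (1 <= j <= t)%N, measurable B & A = delta alpha e j @^-1` B] ].

Local Notation ST t := (g_sigma_algebraType (G0 t)).

Lemma mdelta j : measurable_fun setT (delta alpha e j).
Proof.
rewrite /delta; apply: measurable_fun_ifT => //; apply: measurable_and.
  exact: measurable_fun_ltr.
apply: measurable_fun_ler => //; apply: measurable_funM => //.
exact: measurableT_comp (measurable_inv R) (malpha j).
Qed.

Lemma filt_meas t A : <<s G0 t>> A -> measurable A.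
Proof.
apply: smallest_sub; first exact: sigma_algebra_measurable.
move=> _ [j [B [_ mB ->]]]; rewrite -[_ @^-1` _]setTI; exact: mdelta.
Qed.

Lemma mw_sub t (f : T -> R) : meas_wrt (filt alpha e t) f ->
  measurable_fun [set: ST t] f.
Proof. by move=> h _ B mB; rewrite setTI; exact: h. Qed.

Lemma delta_sub t j : (1 <= j <= t)%N -> measurable_fun [set: ST t] (delta alpha e j).
Proof.
move=> hj _ B mB; rewrite setTI; apply: sub_sigma_algebra; exists j, B; split => //.
Qed.

Lemma RejS t w : Rej alpha e t.+1 w = Rej alpha e t w + delta alpha e t.+1 w.
Proof. by rewrite /Rej big_nat_recr. Qed.

Lemma Rej0 : Rej alpha e 0 = fun _ => 0.
Proof. by apply/funext => w; rewrite /Rej big_geq. Qed.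

Lemma mRej_sub t t' : (t' <= t)%N -> measurable_fun [set: ST t] (Rej alpha e t').
Proof.
elim: t' => [|t' IH] ht; first by rewrite Rej0.
have -> : Rej alpha e t'.+1 = Rej alpha e t' \+ delta alpha e t'.+1.
  by apply/funext => w; rewrite RejS.
apply: measurable_funD; first by apply: IH; exact: ltnW.
by apply: delta_sub; rewrite ht.
Qed.

Lemma mRej t : measurable_fun [set: T] (Rej alpha e t).
Proof.
elim: t => [|t IH]; first by rewrite Rej0.
have -> : Rej alpha e t.+1 = Rej alpha e t \+ delta alpha e t.+1.
  by apply/funext => w; rewrite RejS.
by apply: measurable_funD => //; exact: mdelta.
Qed.

Lemma delta01 j w : delta alpha e j w = 0 \/ delta alpha e j w = 1.
Proof. by rewrite /delta; case: ifP; [right|left]. Qed.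

Lemma delta_ge0 j w : 0 <= delta alpha e j w.
Proof. by case: (delta01 j w) => ->. Qed.

Lemma Rej_ge0 t w : 0 <= Rej alpha e t w.
Proof. by apply: sumr_ge0 => i _; exact: delta_ge0. Qed.

Lemma Rej_le t t' w : (t <= t')%N -> Rej alpha e t w <= Rej alpha e t' w.
Proof.
elim: t' => [|t' IH]; first by rewrite leqn0 => /eqP ->.
rewrite leq_eqVlt => /predU1P[-> //|]; rewrite ltnS => /IH h.
by rewrite RejS (le_trans h) // lerDl delta_ge0.
Qed.

End Main.

Theorem proposition2 (d : measure_display) (T : measurableType d) (R : realType)
  (P : probability T R) (a : R) (theta : nat -> bool)
  (e alpha lambda : nat -> T -> R) :
  (0 < a < 1) ->
  (* e-values: nonnegative random variables *)
  (forall t, measurable_fun setT (e t)) ->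
  (forall t w, 0 <= e t w) ->
  (* testing levels: nonnegative random variables, F_{t-1}-measurable *)
  (forall t, measurable_fun setT (alpha t)) ->
  (forall t w, 0 <= alpha t w) ->
  (forall t, (1 <= t)%N -> meas_wrt (filt alpha e t.-1) (alpha t)) ->
  (* validity: E[e_t | F_{t-1}] <= 1 a.s. for null t, i.e.
     int_A e_t dP <= P(A) for every A in F_{t-1} *)
  (forall t, (1 <= t)%N -> ~~ theta t ->
     forall A, filt alpha e t.-1 A ->
       (\int[P]_(w in A) (e t w)%:E <= P A)%E) ->
  (* lambda_t: (0,1)-valued random variables, F_{t-1}-measurable *)
  (forall t, measurable_fun setT (lambda t)) ->
  (forall t w, 0 < lambda t w < 1) ->
  (forall t, (1 <= t)%N -> meas_wrt (filt alpha e t.-1) (lambda t)) ->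
  (forall t, (1 <= t)%N ->
     (\int[P]_w (FDPhat_saffron alpha e lambda t w)%:E
        >= \int[P]_w (FDPstar theta alpha e t w)%:E)%E)
  /\
  ((forall t, (1 <= t)%N -> {ae P, forall w, FDPhat_saffron alpha e lambda t w <= a}) ->
   forall t, (1 <= t)%N -> (\int[P]_w (FDP theta alpha e t w)%:E <= a%:E)%E).
Proof.
move=> ha me e0 malpha alpha0 halpha hval mlam lam01 hlam.
pose c j := fun w => alpha j w / (Rej alpha e j.-1 w + 1).
have Rp j w : 0 < Rej alpha e j w + 1 by rewrite ltr_wpDl // Rej_ge0.
have c0 j w : 0 <= c j w by rewrite /c divr_ge0 // ltW.
have mcT j : measurable_fun setT (c j).
  apply: measurable_funM => //; apply: measurableT_comp (measurable_inv R) _.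
  by apply: measurable_funD => //; exact: mRej.
have mcS j : (1 <= j)%N -> measurable_fun [set: g_sigma_algebraType (@G0 _ _ _ alpha e j.-1)] (c j).
  move=> j1; have ma := mw_sub (halpha j j1); apply: measurable_funM => //.
  apply: measurableT_comp (measurable_inv R) _.
  by apply: measurable_funD => //; exact: mRej_sub.
pose term j w := c j w * ((if e j w < 1 / lambda j w then 1 else 0) / (1 - lambda j w)).
have term0 j w : 0 <= term j w.
  rewrite /term mulr_ge0 // divr_ge0 //; first by case: ifP.
  by case/andP: (lam01 j w) => _; rewrite subr_ge0 => /ltW.
have mtermT j : measurable_fun setT (term j).
  apply: measurable_funM => //; apply: measurable_funM.
    apply: measurable_fun_ifT => //; apply: measurable_fun_ltr => //.
    apply: measurable_funM => //; exact: measurableT_comp (measurable_inv R) (mlam j).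
  apply: measurableT_comp (measurable_inv R) _; exact: measurable_funB.
pose s t := [seq j <- index_iota 1 t.+1 | ~~ theta j].
have Estar t : (\int[P]_w (FDPstar theta alpha e t w)%:E =
    \sum_(j <- s t) \int[P]_w (c j w)%:E)%E.
  rewrite -ge0_integral_sum //; last by move=> j w _; rewrite lee_fin.
    by apply: eq_integral => w _; rewrite /FDPstar -big_filter sumEFin.
  by move=> j; apply/measurable_EFinP.
have A1 t : (1 <= t)%N -> (\int[P]_w (FDPstar theta alpha e t w)%:E <=
    \int[P]_w (FDPhat_saffron alpha e lambda t w)%:E)%E.
  move=> t1; rewrite Estar.
  apply: (@le_trans _ _ (\sum_(j <- s t) \int[P]_w (term j w)%:E)%E).
    rewrite !big_seq; apply: lee_sum => j.
    rewrite mem_filter mem_index_iota => /andP[hn /andP[j1 _]].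
    exact: (@partA _ _ _ P (@G0 _ _ _ alpha e j.-1) (filt_meas malpha me (t:=j.-1))
      (e j) (me j) (e0 j) (hval j j1 hn) (c j) (lambda j) (mcS j j1) (c0 j)
      (mw_sub (hlam j j1)) (lam01 j)).
  rewrite -ge0_integral_sum //; last 2 first.
  - by move=> j; apply/measurable_EFinP.
  - by move=> j w _; rewrite lee_fin.
  under eq_integral do rewrite sumEFin.
  apply: ge0_le_integral => //.
  - by move=> w _; rewrite lee_fin sumr_ge0.
  - by apply/measurable_EFinP; exact: measurable_sum.
  - by apply/measurable_EFinP; rewrite /FDPhat_saffron; exact: measurable_sum.
  - move=> w _; rewrite lee_fin /FDPhat_saffron big_filter big_mkcond.
    by apply: ler_sum => j _; case: ifP => _ //; exact: term0.
split => // hae t t1.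
have mFDP : measurable_fun setT (FDP theta alpha e t).
  rewrite /FDP; apply: measurable_funM.
    have -> : (fun w => \sum_(1 <= j < t.+1 | ~~ theta j) delta alpha e j w) =
        (fun w => \sum_(j <- s t) delta alpha e j w).
      by apply/funext => w; rewrite big_filter.
    apply: measurable_sum => j; exact: mdelta.
  apply: measurableT_comp (measurable_inv R) _.
  by apply: measurable_maxr => //; exact: mRej.
have FDP0 w : 0 <= FDP theta alpha e t w.
  rewrite /FDP divr_ge0 //; first by apply: sumr_ge0 => j _; exact: delta_ge0.
  by rewrite le_max ler01 orbT.
have B1 : (\int[P]_w (FDP theta alpha e t w)%:E <=
    \sum_(j <- s t) \int[P]_w (c j w * e j w)%:E)%E.
  rewrite -ge0_integral_sum //; last 2 first.
  - by move=> j; apply/measurable_EFinP; exact: measurable_funM.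
  - by move=> j w _; rewrite lee_fin mulr_ge0.
  under [X in (_ <= X)%E]eq_integral do rewrite sumEFin.
  apply: ge0_le_integral => //.
  - by move=> w _; rewrite lee_fin.
  - by apply/measurable_EFinP.
  - by apply/measurable_EFinP; apply: measurable_sum => j; exact: measurable_funM.
  move=> w _; rewrite lee_fin /FDP -big_filter mulr_suml !big_seq.
  apply: ler_sum => j; rewrite mem_filter mem_index_iota => /andP[_ /andP[j1 jt]].
  case: (delta01 _ _ alpha e j w) => hd; first by rewrite hd mul0r mulr_ge0.
  have /andP[a0 ae] : (0 < alpha j w) && (1 / alpha j w <= e j w).
    by move: hd; rewrite /delta; case: ifP => // _ /eqP; rewrite eq_sym oner_eq0.
  have ae1 : 1 <= alpha j w * e j w by rewrite mulrC -ler_pdivrMr.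
  have hj : j = j.-1.+1 by rewrite prednK.
  have hR : Rej alpha e j.-1 w + 1 <= Num.max (Rej alpha e t w) 1.
    have := RejS _ _ alpha e j.-1 w; rewrite -hj hd => <-.
    by rewrite le_max (@Rej_le _ _ _ alpha e j t w jt).
  have Mp : 0 < Num.max (Rej alpha e t w) 1 by rewrite lt_max ltr01 orbT.
  rewrite hd /c; apply: (@le_trans _ _ (1 / (Rej alpha e j.-1 w + 1))).
    rewrite ler_pdivrMr // mulrC mulrA mulr1 ler_pdivlMr // mul1r //.
  have -> : alpha j w / (Rej alpha e j.-1 w + 1) * e j w =
     (alpha j w * e j w) * (1 / (Rej alpha e j.-1 w + 1)) by ring.
  by rewrite ler_peMl // divr_ge0 // ltW.
have B2 : (\sum_(j <- s t) \int[P]_w (c j w * e j w)%:E <=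
    \sum_(j <- s t) \int[P]_w (c j w)%:E)%E.
  rewrite !big_seq; apply: lee_sum => j.
  rewrite mem_filter mem_index_iota => /andP[hn /andP[j1 _]].
  exact: (@key _ _ _ P (@G0 _ _ _ alpha e j.-1) (filt_meas malpha me (t:=j.-1))
      (e j) (me j) (e0 j) (hval j j1 hn) (c j) (mcS j j1) (c0 j)).
apply: (le_trans B1); apply: (le_trans B2); rewrite -Estar.
apply: (le_trans (A1 t t1)).
apply: (@le_trans _ _ (\int[P]_w (cst a%:E) w)%E).
  apply: ae_ge0_le_integral => //.
  - by move=> w _; rewrite lee_fin; apply: sumr_ge0 => j _; exact: term0.
  - by apply/measurable_EFinP; exact: measurable_sum.
  all: try (by move=> w _; rewrite lee_fin ltW //; case/andP: ha).
  all: try (apply: filterS (hae t t1) => w h _; by rewrite lee_fin).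
rewrite integral_cst //; set X := (X in (_ * X)%E).
have -> : X = 1%E by exact: probability_setT.
by rewrite mule1.
Qed.
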